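(* Let $\omega\in S_n$ and $1\le i<j\le n$ with $c_i(\omega),c_j(\omega)>0$, and let $a\in[c_i(\omega)]$, $b\in[c_j(\omega)]$ with $m_{i,a}(\omega)>m_{j,b}(\omega)$. (1) If $a,b\ge 2$, then $m_{i,a-1}(\omega)>m_{j,b-1}(\omega)$. (2) If $a<c_i(\omega)$ and $b<c_j(\omega)$, then $m_{i,a+1}(\omega)>m_{j,b+1}(\omega)$.
   Context: Permutations $\omega\in S_n$ are written in one-line notation. Let ${\rm Inv}(\omega)=\{(i,j): 1\le i<j\le n,\ \omega(i)>\omega(j)\}$, $c_i(\omega)=\#\{j: i<j\le n,\ \omega(i)>\omega(j)\}$, and for $i<j$, $c_{i,j}(\omega)=\#\{k: i<k<j,\ \omega(i)>\omega(k)\}$; $[m]=\{1,\dots,m\}$. For $i$ with $c_i(\omega)>0$ and $x\in[c_i(\omega)]$, $m_{i,x}(\omega)\in\mathbb{N}^n$ has $j$-th coordinate $0$ if $j<i$; $x$ if $j=i$; $0$ if $j>i$ and $(i,j)\in{\rm Inv}(\omega)$; $\max\{0,x-c_{i,j}(\omega)\}$ if $j>i$ and $(i,j)\notin{\rm Inv}(\omega)$. Comparisons $<,>$ are strict comparisons in the product order on $\mathbb{N}^n$ ($u\le v$ iff $u_k\le v_k$ for all $k$). *)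

(* Defs.v *)
From mathcomp Require Import all_boot all_order all_algebra all_fingroup.
Set Implicit Arguments. Unset Strict Implicit. Unset Printing Implicit Defensive.

(* Positions 1..n of the paper are represented by 'I_n (0..n-1);
   a permutation omega in S_n is a w : 'S_n, with omega(i) read as w i. *)

Definition cnt (n : nat) (w : 'S_n) (i : 'I_n) : nat :=
  #|[set j : 'I_n | (i < j) && (w j < w i)]|.

Definition cnt2 (n : nat) (w : 'S_n) (i j : 'I_n) : nat :=
  #|[set k : 'I_n | [&& i < k, k < j & w k < w i]]|.

(* m_{i,x}(w) in N^n; (i,j) in Inv(w) iff i < j and w i > w j.
   max{0, x - c_{i,j}} is the truncated subtraction x - c_{i,j} on nat. *)
Definition mvec (n : nat) (w : 'S_n) (i : 'I_n) (x : nat) : {ffun 'I_n -> nat} :=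
  [ffun j : 'I_n =>
     if j < i then 0
     else if j == i then x
     else if w j < w i then 0
     else x - cnt2 w i j].

Definition prod_le (n : nat) (u v : {ffun 'I_n -> nat}) : bool :=
  [forall k, u k <= v k].

Definition prod_lt (n : nat) (u v : {ffun 'I_n -> nat}) : bool :=
  prod_le u v && (u != v).

(* Main.v *)
Require Import Defs.
From mathcomp Require Import all_boot all_order all_algebra all_fingroup zify.
Lemma cnt2_tri n (w : 'S_n) (i j k : 'I_n) : i < j -> j < k -> w i < w j ->
  cnt2 w i k <= cnt2 w i j + cnt2 w j k.
Proof.
move=> hij hjk hw; rewrite /cnt2.
apply: leq_trans (_ : #|[set l : 'I_n | [&& i < l, l < j & w l < w i]] :|: [set l : 'I_n | [&& j < l, l < k & w l < w j]]| <= _); last first.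
  by rewrite cardsU leq_subr.
apply: subset_leq_card; apply/subsetP => l; rewrite !inE => /and3P [h1 h2 h3].
case: (ltngtP l j) => hl.
- by rewrite h1 h3.
- by rewrite h2 /= (ltn_trans h3 hw) orbT.
- by move: h3; rewrite (val_inj hl) ltnNge (ltnW hw).
Qed.

Theorem mainTheorem3 (n : nat) (w : 'S_n) (i j : 'I_n) (a b : nat) :
  i < j ->
  0 < cnt w i -> 0 < cnt w j ->
  1 <= a <= cnt w i -> 1 <= b <= cnt w j ->
  prod_lt (mvec w j b) (mvec w i a) ->
  (2 <= a -> 2 <= b -> prod_lt (mvec w j b.-1) (mvec w i a.-1)) /\
  (a < cnt w i -> b < cnt w j -> prod_lt (mvec w j b.+1) (mvec w i a.+1)).
Proof.
move=> hij _ _ /andP[ha _] /andP[hb _] /andP[/forallP H _].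
have hji : (j < i) = false by apply/negbTE; rewrite -leqNgt ltnW.
have hjni : (j == i) = false by apply/negbTE; rewrite neq_ltn hij orbT.
have hki (k : 'I_n) : j <= k -> ((k < i) = false) * ((k == i) = false).
  move=> hk; split; apply/negbTE; first by rewrite -leqNgt ltnW // (leq_trans hij hk).
  by rewrite neq_ltn (leq_trans hij hk) orbT.
have := H j; rewrite !ffunE ltnn eqxx hji hjni.
case: ifP => hw; first by rewrite leqn0 => /eqP hb0; rewrite hb0 in hb.
move=> hbj.
have hwij : w i < w j.
  rewrite ltn_neqAle leqNgt hw andbT; apply/negP => /eqP /val_inj /perm_inj hh.
  by move: hij; rewrite hh ltnn.

have distinct x y : 0 < x -> mvec w j y != mvec w i x.
  move=> hx; apply/negP => /eqP /ffunP /(_ i); rewrite !ffunE hij ltnn eqxx.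
  by move=> h; rewrite -h in hx.
split.
- move=> ha2 hb2; apply/andP; split; last by apply: distinct; lia.
  apply/forallP => k; rewrite !ffunE.
  case: (ltnP k j) => hkj; first by [].
  rewrite (hki k hkj).1 (hki k hkj).2 /=.
  case: eqP => [->|/eqP hkn]; first by rewrite hw; lia.
  case: ifP => // hkw.
  have hki' : (w k < w i) = false by apply/negbTE; rewrite -leqNgt; apply: leq_trans (ltnW hwij) _; rewrite leqNgt hkw.
  have := H k; rewrite !ffunE (hki k hkj).1 (hki k hkj).2 ltnNge hkj /= (negbTE hkn) hkw hki'.
  lia.
- move=> _ _; apply/andP; split; last by apply: distinct.
  apply/forallP => k; rewrite !ffunE.
  case: (ltnP k j) => hkj; first by [].
  rewrite (hki k hkj).1 (hki k hkj).2 /=.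
  case: eqP => [->|/eqP hkn]; first by rewrite hw; lia.
  case: ifP => // hkw.
  have hki' : (w k < w i) = false by apply/negbTE; rewrite -leqNgt; apply: leq_trans (ltnW hwij) _; rewrite leqNgt hkw.
  rewrite hki'.
  have hjk : j < k by rewrite ltn_neqAle eq_sym hkn hkj.
  have := @cnt2_tri _ w i j k hij hjk hwij.
  lia.
Qed.
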